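(* Let $G$ be a finite simple triangle-free graph without isolated vertices having a maximum open packing (a set of size $\rho_o(G)$) whose induced subgraph has all components isomorphic to $K_2$, and let $H$ be a finite bipartite graph of order at least two without isolated vertices. Then $$\gamma_{tR}(G\times H)\ge \rho_o(G)\gamma_{tR}(H).$$
   Context: An open packing of $G$ is a set $D$ of vertices with $N(u)\cap N(v)=\emptyset$ for all distinct $u,v\in D$ (open neighborhoods); $\rho_o(G)$ is the maximum size of an open packing. A total Roman dominating function on $H$ is a map $f:V(H)\to\{0,1,2\}$ such that every vertex with label 0 has a neighbor with label 2 and the subgraph induced by vertices with positive labels has no isolated vertices; $\gamma_{tR}(H)$ is the minimum of $\sum_v f(v)$ over such $f$. The direct product $G\times H$ has vertex set $V(G)\times V(H)$, with $(g,h)(g',h')$ an edge iff $gg'\in E(G)$ and $hh'\in E(H)$. *)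

(* Defs.v *)
From mathcomp Require Import all_boot.
Set Implicit Arguments. Unset Strict Implicit. Unset Printing Implicit Defensive.

Section Graphs.
Variable T : finType.
Variable e : rel T.

Definition simple_graph : Prop := symmetric e /\ irreflexive e.

Definition opn (v : T) : {set T} := [set u | e v u].

Definition no_isolated : Prop := forall v : T, exists u : T, e v u.

Definition triangle_free : Prop := forall x y z : T, ~ [&& e x y, e y z & e x z].

Definition bipartite : Prop :=
  exists c : T -> bool, forall x y : T, e x y -> c x != c y.

Definition open_packing (D : {set T}) : bool :=
  [forall u in D, forall v in D, (u != v) ==> [disjoint opn u & opn v]].

Definition rho_o : nat := \max_(D : {set T} | open_packing D) #|D|.

Definition tRDF (f : {ffun T -> 'I_3}) : bool :=
  [forall v, (val (f v) == 0) ==> [exists u, e v u && (val (f u) == 2)]] &&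
  [forall v, (val (f v) != 0) ==> [exists u, e v u && (val (f u) != 0)]].

Definition weight (f : {ffun T -> 'I_3}) : nat := \sum_(v : T) val (f v).

(* gamma_tR(G): minimum weight of a TRDF; the default 2*|V| is the weight of
   the all-2 function, which is a TRDF whenever G has no isolated vertices, so
   for such graphs this is exactly the minimum. *)
Definition gamma_tR : nat :=
  \big[minn/(2 * #|T|)]_(f : {ffun T -> 'I_3} | tRDF f) weight f.

End Graphs.

Definition direct_prod (T1 T2 : finType) (e1 : rel T1) (e2 : rel T2) : rel (T1 * T2) :=
  fun x y => e1 x.1 y.1 && e2 x.2 y.2.

(* Main.v *)
Require Import Defs.
From mathcomp Require Import all_boot.
Set Implicit Arguments. Unset Strict Implicit.

Definition Mx (TG TH : finType) (eG : rel TG) (f : {ffun TG * TH -> 'I_3})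
  (a : TG) (h : TH) : nat := \max_(x | eG a x) val (f (x, h)).

Lemma Mx_le2 (TG TH : finType) (eG : rel TG) (f : {ffun TG * TH -> 'I_3}) a h :
  Mx eG f a h <= 2.
Proof. apply/bigmax_leqP => x _; have := ltn_ord (f (x, h)); by []. Qed.

Lemma Mx_ge (TG TH : finType) (eG : rel TG) (f : {ffun TG * TH -> 'I_3}) a h x :
  eG a x -> val (f (x, h)) <= Mx eG f a h.
Proof. move=> eax; rewrite /Mx; exact: (@leq_bigmax_cond _ (eG a) (fun x => val (f (x, h))) x eax). Qed.

Lemma Mx_le_sum (TG TH : finType) (eG : rel TG) (f : {ffun TG * TH -> 'I_3}) a h :
  Mx eG f a h <= \sum_(x | eG a x) val (f (x, h)).
Proof.
apply/bigmax_leqP => x eax; rewrite (bigD1 x) //=; exact: leq_addr.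
Qed.

Lemma key (TG TH : finType) (eG : rel TG) (eH : rel TH) (f : {ffun TG * TH -> 'I_3}) a b h :
  tRDF (direct_prod eG eH) f -> eG a b ->
  (Mx eG f a h = 0 -> exists2 h', eH h h' & Mx eG f b h' = 2) /\
  (exists2 h', eH h h' & Mx eG f b h' != 0).
Proof.
move=> /andP[/forallP H1 /forallP H2] eab.
have fb0 : val (f (b, h)) = 0 -> exists2 h', eH h h' & Mx eG f b h' = 2.
  move=> fb0; move: (H1 (b, h)); rewrite fb0 eqxx /=.
  move=> /existsP[[y h'] /andP[/andP[eby ehh] /eqP fy2]].
  exists h' => //; apply: anti_leq; rewrite Mx_le2 /=.
  by have /= := Mx_ge f h' eby; rewrite fy2.
split.
  move=> Ma0; apply: fb0; apply/eqP; rewrite -leqn0; apply: leq_trans (Mx_ge f h eab) _; by rewrite Ma0.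
case: (eqVneq (val (f (b, h))) 0) => [/fb0 [h' ? M2] | fbn0]; first by exists h'; rewrite ?M2.
move: (H2 (b, h)); rewrite fbn0 /=.
move=> /existsP[[y h'] /andP[/andP[eby ehh] fyn0]].
exists h' => //; rewrite -lt0n; apply: leq_trans (Mx_ge f h' eby); by rewrite lt0n.
Qed.

Definition gf (TG TH : finType) (eG : rel TG) (c : TH -> bool) (p : TG -> TG)
  (f : {ffun TG * TH -> 'I_3}) (u : TG) : {ffun TH -> 'I_3} :=
  [ffun h => inord (if c h then Mx eG f u h else Mx eG f (p u) h)].

Lemma gfE (TG TH : finType) (eG : rel TG) c p (f : {ffun TG * TH -> 'I_3}) u h :
  val (gf eG c p f u h) = if c h then Mx eG f u h else Mx eG f (p u) h.
Proof. by rewrite ffunE /= inordK // ltnS; case: (c h); apply: Mx_le2. Qed.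

Lemma gf_tRDF (TG TH : finType) (eG : rel TG) (eH : rel TH) c p
   (f : {ffun TG * TH -> 'I_3}) u :
  (forall x y, eH x y -> c x != c y) ->
  eG u (p u) -> eG (p u) u -> tRDF (direct_prod eG eH) f ->
  tRDF eH (gf eG c p f u).
Proof.
move=> hc e1 e2 tf.
have Hv h h' : eH h h' -> val (gf eG c p f u h') =
    if c h then Mx eG f (p u) h' else Mx eG f u h'.
  move=> /hc; rewrite gfE; by case: (c h); case: (c h').
apply/andP; split; apply/forallP => h; apply/implyP; rewrite gfE.
  case ch: (c h).
    move=> /eqP /(proj1 (key h tf e1)) [h' eh M2].
    by apply/existsP; exists h'; rewrite eh (Hv _ _ eh) ch M2.
  move=> /eqP /(proj1 (key h tf e2)) [h' eh M2].
  by apply/existsP; exists h'; rewrite eh (Hv _ _ eh) ch M2.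
case ch: (c h) => _.
  case: (proj2 (key h tf e1)) => h' eh M2.
  by apply/existsP; exists h'; rewrite eh (Hv _ _ eh) ch M2.
case: (proj2 (key h tf e2)) => h' eh M2.
by apply/existsP; exists h'; rewrite eh (Hv _ _ eh) ch M2.
Qed.

Lemma bigmin_le_seq (I : eqType) (r : seq I) (P : pred I) (F : I -> nat) d j :
  j \in r -> P j -> \big[minn/d]_(i <- r | P i) F i <= F j.
Proof.
elim: r => // a r IH; rewrite inE big_cons => /orP[/eqP -> -> | jr Pj].
  exact: geq_minl.
case: (P a); last exact: IH.
by rewrite geq_min IH ?orbT.
Qed.

Lemma gamma_le (T : finType) (e : rel T) f : tRDF e f -> gamma_tR e <= weight f.
Proof. by move=> tf; rewrite /gamma_tR; apply: bigmin_le_seq; rewrite ?mem_index_enum. Qed.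

Lemma gamma_le_def (T : finType) (e : rel T) : gamma_tR e <= 2 * #|T|.
Proof.
rewrite /gamma_tR; apply: (big_rec (fun x => x <= 2 * #|T|)) => //.
by move=> i x _ hx; rewrite geq_min hx orbT.
Qed.

Lemma packing_sum (T : finType) (e : rel T) (D : {set T}) (F : T -> nat) :
  open_packing e D ->
  \sum_(u in D) \sum_(x | e u x) F x <= \sum_x F x.
Proof.
move=> /forallP pD.
under eq_bigr do rewrite big_mkcond.
rewrite exchange_big /=; apply: leq_sum => x _.
case: (pickP (fun u => (u \in D) && e u x)) => [u0 /andP[u0D eu0] | none].
  rewrite (bigD1 u0) //= eu0 big1 ?addn0 // => u /andP[uD neq].
  case eux: (e u x) => //; exfalso.
  have := pD u; rewrite uD /= => /forallP /(_ u0); rewrite u0D neq /=.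
  move=> dis; have := disjointFr dis (x:=x); rewrite !inE eux eu0 => /(_ isT) //.
rewrite big1 // => u uD; case eux: (e u x) => //.
by have := none u; rewrite uD eux.
Qed.

Theorem theorem2p9 (TG TH : finType) (eG : rel TG) (eH : rel TH) :
  simple_graph eG -> triangle_free eG -> no_isolated eG ->
  (exists D : {set TG},
      [/\ open_packing eG D, #|D| = rho_o eG &
          forall u, u \in D -> #|[set v in D | eG u v]| = 1]) ->
  simple_graph eH -> bipartite eH -> 2 <= #|TH| -> no_isolated eH ->
  rho_o eG * gamma_tR eH <= gamma_tR (direct_prod eG eH).
Proof.
move=> [sG irG] _ _ [D [pD cardD hD]] [sH irH] [c hc] _ _.
rewrite -cardD.
pose p u := if u \in D then odflt u [pick v in D | eG u v] else u.
have pP u : u \in D -> (p u \in D) && eG u (p u).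
  move=> uD; rewrite /p uD; case: pickP => [v /andP[vD euv] | none].
    by rewrite /= vD euv.
  have /cards1P [x hx] := introT eqP (hD u uD).
  have : x \in [set v in D | eG u v] by rewrite hx set11.
  by rewrite inE none.
have puniq u v : u \in D -> v \in D -> eG u v -> v = p u.
  move=> uD vD euv; have /cards1P [x hx] := introT eqP (hD u uD).
  have /andP[puD eup] := pP u uD.
  have : v \in [set v in D | eG u v] by rewrite inE vD euv.
  have : p u \in [set v in D | eG u v] by rewrite inE puD eup.
  by rewrite hx !inE => /eqP -> /eqP ->.
have pK : involutive p.
  move=> u; case uD: (u \in D); last by rewrite /p uD uD.
  have /andP[puD eup] := pP u uD.
  by apply/esym/puniq => //; rewrite sG.
have pinj := inv_inj pK.
have pD' u : (p u \in D) = (u \in D).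
  case uD: (u \in D); first by have /andP[] := pP u uD.
  by rewrite /p uD.
have reidx (F : TG -> nat) : \sum_(u in D) F (p u) = \sum_(u in D) F u.
  rewrite [RHS](reindex_inj pinj); apply: eq_bigl => u; by rewrite pD'.
set k := #|D| * gamma_tR eH.
rewrite /gamma_tR; apply: (big_ind (fun x => k <= x)).
- rewrite /k card_prod; apply: leq_trans (leq_mul (max_card (mem D)) (gamma_le_def eH)) _.
  by rewrite mulnCA.
- by move=> x y kx ky; rewrite leq_min kx ky.
move=> f tf.
have gt u : u \in D -> tRDF eH (gf eG c p f u).
  move=> uD; have /andP[_ eup] := pP u uD.
  by apply: gf_tRDF => //; rewrite sG.
pose S u h := \sum_(x | eG u x) val (f (x, h)).
apply: (@leq_trans (\sum_(u in D) weight (gf eG c p f u))).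
  rewrite /k -sum_nat_const; apply: leq_sum => u uD; exact: gamma_le (gt u uD).
apply: (@leq_trans (\sum_(u in D) \sum_h (if c h then S u h else S (p u) h))).
  apply: leq_sum => u _; apply: leq_sum => h _; rewrite gfE.
  by case: (c h); apply: Mx_le_sum.
rewrite exchange_big /=.
rewrite (eq_bigr (fun h => \sum_(u in D) S u h)); last first.
  by move=> h _; case: (c h); rewrite ?(reidx (S^~ h)).
rewrite exchange_big /= /S.
under eq_bigr do rewrite exchange_big /=.
apply: leq_trans (_ : _ <= \sum_x \sum_h val (f (x, h))) _.
  exact: (packing_sum (fun x => \sum_h val (f (x, h))) pD).
rewrite /weight pair_big /=; apply: eq_leq; apply: eq_bigr; by case.
Qed.
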